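(* Let $a,p>0$, $g(r;a,p)=a\,e^{-pr^2}$, and $I_{n,k,l}=\int_0^\infty f^k(r)\,g^l(r;a,p)\,r^{2n+1}dr$. If $f$ satisfies condition (1), then $I_{n,k,l}$ exists for all $n,k\in\mathbb{N}_0$ and all $l\in\mathbb{N}$. Moreover, if $f$ satisfies condition (1) and $c_{2n}$ exists, then $I_{n,k,0}$ exists for all $k\in\mathbb{N}$.
   Context: $f:[0,\infty)\to\mathbb{R}$; $c_n=2\pi\int_0^\infty f(r)\,r^{n+1}dr$. Condition (1): there is a constant $F$ with $0\le f(r)\le F$ for all $r\ge0$, $c_0$ exists and $c_0>0$. $\mathbb{N}=\{1,2,\dots\}$, $\mathbb{N}_0=\{0,1,2,\dots\}$. *)

(* Defs.v *)
From HB Require Import structures.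
From mathcomp Require Import all_boot all_order all_algebra.
From mathcomp Require Import all_classical all_reals all_analysis.
Set Implicit Arguments. Unset Strict Implicit. Unset Printing Implicit Defensive.
Import Order.TTheory GRing.Theory Num.Theory.
Local Open Scope classical_set_scope.
Local Open Scope ring_scope.

Definition halfline (R : realType) : set R := `[0, +oo[%classic.

Definition gfun (R : realType) (a p : R) (r : R) : R := a * expR (- (p * r ^+ 2)).

Definition c_exists (R : realType) (f : R -> R) (n : nat) : Prop :=
  (@lebesgue_measure R).-integrable (@halfline R) (fun r => (f r * r ^+ n.+1)%:E).

Definition cmom (R : realType) (f : R -> R) (n : nat) : R :=
  2 * (pi : R) * Rintegral (@lebesgue_measure R) (@halfline R) (fun r => f r * r ^+ n.+1).

Definition cond1 (R : realType) (f : R -> R) : Prop :=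
  (exists F : R, forall r : R, 0 <= r -> 0 <= f r <= F) /\
  c_exists f 0 /\ 0 < cmom f 0.

Definition Iintegrand (R : realType) (f : R -> R) (a p : R) (n k l : nat) (r : R) : R :=
  f r ^+ k * gfun a p r ^+ l * r ^+ (2 * n).+1.

Definition I_exists (R : realType) (f : R -> R) (a p : R) (n k l : nat) : Prop :=
  (@lebesgue_measure R).-integrable (@halfline R) (fun r => (Iintegrand f a p n k l r)%:E).

(* Main.v *)
Require Import Defs.
From HB Require Import structures.
From mathcomp Require Import all_boot all_order all_algebra.
From mathcomp Require Import all_classical all_reals all_analysis measurable_realfun.
From mathcomp Require Import ring lra.
Import Order.TTheory GRing.Theory Num.Theory.
Local Open Scope ring_scope.

Lemma pow_le_fact_exp (R : realType) (m : nat) (r : R) : 0 <= r ->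
  r ^+ m <= m`!%:R * expR r.
Proof.
move=> r0; case: m => [|m].
  rewrite expr0 fact0 mul1r; have := expR_ge1Dx r; lra.
have hf : (0 < (m.+1)`!%:R :> R) by rewrite ltr0n fact_gt0.
have h := expR_ge1Dxn m r0.
have h2 : 0 <= r ^+ m.+1 / (m.+1)`!%:R by apply: divr_ge0; [exact: exprn_ge0 | exact: ltW].
have e : r ^+ m.+1 = (m.+1)`!%:R * (r ^+ m.+1 / (m.+1)`!%:R).
  by field; rewrite gt_eqF.
rewrite {1}e; apply: ler_wpM2l; first exact: ltW.
lra.
Qed.

Lemma gauss_bound (R : realType) (p : R) (m : nat) (r : R) : 0 < p -> 0 <= r ->
  r ^+ m * expR (- (p * r ^+ 2)) <= (m`!%:R * expR p^-1) * expR (- r).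
Proof.
move=> p0 r0.
have hq : 2 * r - p * r ^+ 2 <= p^-1.
  rewrite -subr_ge0.
  have -> : p^-1 - (2 * r - p * r ^+ 2) = (p * r - 1) ^+ 2 / p.
    by field; rewrite gt_eqF.
  by rewrite divr_ge0 ?sqr_ge0 ?ltW.
apply: (le_trans (y := m`!%:R * expR r * expR (- (p * r ^+ 2)))).
  by apply: ler_wpM2r; [exact: expR_ge0 | exact: pow_le_fact_exp].
have -> : m`!%:R * expR r * expR (- (p * r ^+ 2)) =
          m`!%:R * expR (2 * r - p * r ^+ 2) * expR (- r).
  rewrite -!mulrA -!expRD; congr (_ * expR _); ring.
apply: ler_wpM2r; first exact: expR_ge0.
apply: ler_wpM2l; first by rewrite ler0n.
by rewrite ler_expR.
Qed.

Section aux.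
Local Open Scope classical_set_scope.

Lemma halflineE (R : realType) (r : R) : @halfline R r = (0 <= r).
Proof. by rewrite /halfline /= in_itv /= andbT. Qed.

Lemma measurable_halfline (R : realType) : measurable (@halfline R).
Proof. exact: measurable_itv. Qed.

Lemma measurable_f (R : realType) (f : R -> R) : c_exists f 0 ->
  measurable_fun (@halfline R) f.
Proof.
move=> hc0; rewrite /halfline; apply/measurable_fun_itv_obnd_cbndP.
have m1 : measurable_fun (`]0, +oo[ : set R) (fun r => f r * r).
  apply: (measurable_funS (measurable_halfline R)).
    by move=> x /=; rewrite halflineE in_itv /= andbT => /ltW.
  apply/measurable_EFinP; exact: (measurable_int _ hc0).
have m2 : measurable_fun (`]0, +oo[ : set R) (fun r : R => r^-1).
  apply: open_continuous_measurable_fun; first exact: interval_open.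
  move=> x; rewrite inE /= in_itv /= andbT => x0.
  by apply: inv_continuous; rewrite gt_eqF.
apply: (eq_measurable_fun (fun r => (f r * r) * r^-1)).
  by move=> x; rewrite inE /= in_itv /= andbT => x0; rewrite mulfK ?gt_eqF.
exact: measurable_funM.
Qed.

Lemma measurable_I (R : realType) (f : R -> R) (a p : R) n k l : c_exists f 0 ->
  measurable_fun (@halfline R) (fun r => (Iintegrand f a p n k l r)%:E).
Proof.
move=> hc0; have mf := @measurable_f R f hc0.
apply/measurable_EFinP; rewrite /Iintegrand.
apply: measurable_funM; first apply: measurable_funM.
- exact: measurable_funX.
- apply: measurable_funX; rewrite /gfun; apply: measurable_funM => //.
  apply: measurableT_comp; first exact: measurable_expR.
  apply: measurableT_comp => //.
  apply: measurable_funM => //.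
- exact: measurable_funX.
Qed.

Lemma integrable_expN (R : realType) :
  (@lebesgue_measure R).-integrable (@halfline R) (fun r => (expR (- r))%:E).
Proof.
have := integrable_exponential_pdf (R := R) ltr01.
move=> h; have : (@lebesgue_measure R).-integrable (@halfline R) (EFin \o exponential_pdf 1).
  by apply: (integrableS _ _ _ h) => //; exact: measurable_itv.
idtac.
apply: eq_integrable; first exact: measurable_itv.
move=> x; rewrite inE halflineE => x0.
by rewrite /= exponential_pdfE // mulN1r mul1r.
Qed.

End aux.

Theorem lemma3 (R : realType) (a p : R) (ha : 0 < a) (hp : 0 < p) (f : R -> R) :
  cond1 f ->
  (forall n k l : nat, (0 < l)%N -> I_exists f a p n k l) /\
  (forall n : nat, c_exists f (2 * n) ->
     forall k : nat, (0 < k)%N -> I_exists f a p n k 0).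
Proof.
move=> [[F hF] [hc0 _]].
have F0 : 0 <= F by case/andP: (hF 0 (lexx 0)) => h1 h2; exact: le_trans h1 h2.
have fk : forall k r, 0 <= r -> 0 <= f r ^+ k <= F ^+ k.
  move=> k r r0; case/andP: (hF r r0) => h1 h2.
  by rewrite exprn_ge0 //= lerXn2r // nnegrE.
split.
- move=> n k [//|l'] _.
  set m := (2 * n).+1.
  set K := m`!%:R * expR p^-1.
  have K0 : 0 <= K by rewrite mulr_ge0 ?ler0n ?expR_ge0.
  set C := F ^+ k * a ^+ l' * a * K.
  have hI := integrableZl _ C (@integrable_expN R).
  apply: (le_integrable _ _ _ (hI ltac:(exact: measurable_itv))); first exact: measurable_itv.
  exact: measurable_I.
  move=> r; rewrite halflineE => r0.
  rewrite -EFinM /= lee_fin.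
  have E0 : 0 <= expR (- (p * r ^+ 2)) by exact: expR_ge0.
  have E1 : expR (- (p * r ^+ 2)) <= 1.
    by rewrite expR_le1 oppr_le0 mulr_ge0 ?exprn_ge0 // ltW.
  have g0 : 0 <= gfun a p r by rewrite /gfun mulr_ge0 // ltW.
  have ga : gfun a p r <= a by rewrite /gfun -{2}(mulr1 a) ler_wpM2l // ltW.
  have [fk0 fkF] := andP (fk k r r0).
  rewrite /Iintegrand.
  have -> : f r ^+ k * gfun a p r ^+ l'.+1 * r ^+ (2 * n).+1 =
     (f r ^+ k * gfun a p r ^+ l') * (a * (r ^+ m * expR (- (p * r ^+ 2)))).
    by rewrite /gfun /m exprSr; ring.
  have -> : C * expR (- r) = (F ^+ k * a ^+ l') * (a * (K * expR (- r))).
    by rewrite /C; ring.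
  have I0 : 0 <= (f r ^+ k * gfun a p r ^+ l') * (a * (r ^+ m * expR (- (p * r ^+ 2)))).
    apply: mulr_ge0; first (apply: mulr_ge0; [exact: fk0 | exact: exprn_ge0 g0]).
    apply: mulr_ge0; first exact: ltW.
    by apply: mulr_ge0; [exact: exprn_ge0 r0 | exact: expR_ge0].
  rewrite ger0_norm //; rewrite ger0_norm; last first.
    by rewrite !mulr_ge0 ?exprn_ge0 ?expR_ge0 // ltW.
  apply: ler_pM.
  + by apply: mulr_ge0; [exact: fk0 | exact: exprn_ge0 g0].
  + apply: mulr_ge0; first exact: ltW.
    by apply: mulr_ge0; [exact: exprn_ge0 r0 | exact: expR_ge0].
  + apply: ler_pM; [exact: fk0 | exact: exprn_ge0 g0 | exact: fkF | ].
    by apply: lerXn2r; rewrite ?nnegrE // ltW.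
  + apply: ler_wpM2l; first exact: ltW.
    exact: gauss_bound.
- move=> n0 hc [//|k'] _.
  have hI := integrableZl _ (F ^+ k') hc.
  apply: (le_integrable _ _ _ (hI ltac:(exact: measurable_itv))); first exact: measurable_itv.
  exact: measurable_I.
  move=> r; rewrite halflineE => r0.
  rewrite -EFinM /= lee_fin.
  have [f0 fF] := andP (hF r r0).
  have [fk0 fkF] := andP (fk k' r r0).
  rewrite /Iintegrand expr0 mulr1 exprSr -mulrA.
  rewrite ger0_norm; last by rewrite !mulr_ge0 ?exprn_ge0.
  rewrite ger0_norm; last by rewrite !mulr_ge0 ?exprn_ge0.
  by apply: ler_wpM2r => //; rewrite mulr_ge0 ?exprn_ge0.
Qed.
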